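(* Fix a positive integer $s$, and let $h_{s,i,j}$ and $H_i(x)=\sum_{j\ge i+1}h_{s,i,j}x^j$ be as in the context. Then for every integer $0\le i\le 2s-1$, $$H_i=\sum_{j=0}^{i}(-1)^{j+1}\binom{s}{j}x^j+(-1)^{i+1}\binom{2s}{i}\frac{x^{i+1}}{(1-x)^{s+1}}+(-1)^i(2s-i)\binom{2s}{i}\sum_{t=0}^{i}(-1)^t\binom{i}{t}\frac{1}{2s-t}\frac{1}{(1-x)^{s-t}},$$ as an identity of formal power series (equivalently of rational functions) in $x$.
   Context: For a fixed positive integer $s$, the numbers $h_{s,i,j}$ (integers $i\ge 0$, $j$) are defined recursively by: $h_{s,i,j}=0$ if $j\le i$; for $i=0$ and $j\ge 1$, $h_{s,0,j}=\binom{s+j-1}{j}\frac{s-j}{s}$; for $i>0$ and $j>i$, $h_{s,i,j}=-\frac{s-j+1}{i}h_{s,i-1,j-1}-\frac{j-i}{i}h_{s,i-1,j}$. $H_i(x)=\sum_{j\ge i+1}h_{s,i,j}x^j$. *)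

(* Defs.v *)
From mathcomp Require Import all_boot all_order all_algebra.
Set Implicit Arguments. Unset Strict Implicit. Unset Printing Implicit Defensive.
Import Order.TTheory GRing.Theory Num.Theory.
Local Open Scope ring_scope.

Fixpoint h (s i j : nat) : rat :=
  match i with
  | 0 => if (j <= 0)%N then 0
         else 'C(s + j - 1, j)%:R * ((s%:R - j%:R) / s%:R)
  | i'.+1 => if (j <= i'.+1)%N then 0
         else - ((s%:R - j%:R + 1) / i'.+1%:R) * h s i' j.-1
              - ((j%:R - i'.+1%:R) / i'.+1%:R) * h s i' j
  end.

Definition fps := nat -> rat.

Definition H (s i : nat) : fps := fun n => if (i.+1 <= n)%N then h s i n else 0.

Definition fps_one : fps := fun n => (n == 0%N)%:R.
Definition fps_Xn (j : nat) : fps := fun n => (n == j)%:R.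
Definition fps_mul (a b : fps) : fps :=
  fun n => \sum_(k < n.+1) a k * b (n - k)%N.
Definition fps_pow (a : fps) (m : nat) : fps := iter m (fps_mul a) fps_one.

(* formal inverse of a series (meaningful when a 0 != 0):
   b_0 = 1/a_0, b_n = -(1/a_0) sum_{k=1}^n a_k b_{n-k} *)
Fixpoint inv_seq (a : fps) (n : nat) : seq rat :=
  match n with
  | 0 => [:: (a 0%N)^-1]
  | n'.+1 => let bs := inv_seq a n' in
      rcons bs (- (a 0%N)^-1 * \sum_(k < n'.+1) a k.+1 * nth 0 bs (n' - k)%N)
  end.
Definition fps_inv (a : fps) : fps := fun n => nth 0 (inv_seq a n) n.

Definition fps_zpow (a : fps) (z : int) : fps :=
  match z with
  | Posz m => fps_pow a m
  | Negz m => fps_inv (fps_pow a m.+1)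
  end.

Definition one_minus_x : fps :=
  fun n => if n == 0%N then 1 else if n == 1%N then -1 else 0.

(* Main.v *)
Require Import Defs.
From mathcomp Require Import all_boot all_order all_algebra.
From mathcomp Require Import ring lra zify.
Import Order.TTheory GRing.Theory Num.Theory.
Local Open Scope ring_scope.
Set Warnings "-notation-overridden -ambiguous-paths".

Ltac nz := repeat (apply/andP; split); rewrite ?natr1 ?nat1r ?pnatr_eq0 //.

Fixpoint g (c : rat) (n : nat) : rat :=
  match n with 0 => 1 | m.+1 => g c m * (c + m%:R) / m.+1%:R end.

Arguments g : simpl never.

Lemma g_0 c : g c 0 = 1.
Proof. by []. Qed.

Lemma gSr c m : g c m.+1 = g c m * (c + m%:R) / m.+1%:R.
Proof. by []. Qed.

Lemma gS c m : m.+1%:R * g c m.+1 = (c + m%:R) * g c m.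
Proof. rewrite gSr; field; by rewrite nat1r pnatr_eq0. Qed.

Lemma g0 n : g 0 n = (n == 0%N)%:R.
Proof.
elim: n => [|n IH] //; rewrite gSr IH.
by case: n {IH} => [|n] /=; rewrite ?add0r ?mulr0 ?mul0r.
Qed.

Lemma gP2 c n : g (c - 1) n = g c n - (if n is m.+1 then g c m else 0).
Proof.
elim: n => [|[|m] IH]; first by rewrite !g_0 subr0.
  by rewrite !gSr !g_0; field.
rewrite gSr IH (gSr c m.+1) (gSr c m) -!natr1.
by field; nz.
Qed.

Lemma gconv a b n :
  \sum_(k < n.+1) g a k * g b (n - k)%N = g (a + b) n.
Proof.
elim: n => [|n IH]; first by rewrite big_ord1 /= !g_0 mulr1.
apply: (@mulfI _ (n.+1%:R)); first by rewrite pnatr_eq0.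
rewrite gS -IH mulr_sumr.
transitivity (\sum_(k < n.+2) ((k%:R * g a k) * g b (n.+1 - k)%N
    + g a k * ((n.+1 - k)%N%:R * g b (n.+1 - k)%N))).
  apply: eq_bigr => k _; rewrite natrB; last by rewrite -ltnS. ring.
rewrite big_split /= big_ord_recl /= mulr0n !mul0r add0r.
rewrite [X in _ + X]big_ord_recr /= subnn mul0r mulr0 addr0.
rewrite mulr_sumr -big_split; apply: eq_bigr => k _.
rewrite /= /bump add1n subSS gS subSn; last by rewrite -ltnS.
rewrite gS natrB; last by rewrite -ltnS.
ring.
Qed.

Lemma mul_omx F n : fps_mul one_minus_x F n = F n - (if n is m.+1 then F m else 0).
Proof.
rewrite /fps_mul; case: n => [|m].
  by rewrite big_ord1 /= mul1r subr0.
rewrite big_ord_recl big_ord_recl big1 => [|k _].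
  by rewrite /= addr0 mul1r mulN1r subn0 /bump /= subSS subn0.
by rewrite !lift0 mul0r.
Qed.

Lemma pow_omx m n : fps_pow one_minus_x m n = g (- m%:R) n.
Proof.
elim: m n => [|m IH] n.
  by rewrite oppr0 g0.
rewrite /fps_pow iterS -/(fps_pow _ m) mul_omx -natr1 opprD gP2.
by case: n => [|n]; rewrite !IH.
Qed.

Lemma Xn_mul j F n : fps_mul (fps_Xn j) F n = if (j <= n)%N then F (n - j)%N else 0.
Proof.
rewrite /fps_mul /fps_Xn; case: ifP => hj.
  have hj' : (j < n.+1)%N by rewrite ltnS.
  rewrite (bigD1 (Ordinal hj')) //= eqxx mul1r big1 ?addr0 // => k hk.
  have -> : (nat_of_ord k == j) = false.
    by apply/negbTE; apply: contra hk => /eqP hk; apply/eqP; apply: val_inj.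
  by rewrite mul0r.
rewrite big1 // => k _.
have -> : (nat_of_ord k == j) = false.
  apply/negbTE; apply/eqP => e; move: (ltn_ord k); rewrite e ltnS hj //.
by rewrite mul0r.
Qed.

Lemma inv_unique a b : a 0%N != 0 -> (forall n, fps_mul a b n = fps_one n) ->
  forall n, fps_inv a n = b n.
Proof.
move=> a0 hab.
have b0 : b 0%N = (a 0%N)^-1.
  have := hab 0%N; rewrite /fps_mul big_ord1 /fps_one /= => e.
  by apply: (mulfI a0); rewrite e divff.
suff E : forall n, inv_seq a n = mkseq b n.+1.
  by move=> n; rewrite /fps_inv E nth_mkseq.
elim=> [|n IH]; first by rewrite /mkseq /= b0.
rewrite /= IH (mkseqS b n.+1); congr rcons.
have := hab n.+1; rewrite /fps_mul big_ord_recl /fps_one /= subn0 => e.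
have e2 : \sum_(k < n.+1) a k.+1 * nth 0 (mkseq b n.+1) (n - k) =
          \sum_(k < n.+1) a (lift ord0 k) * b (n.+1 - lift ord0 k)%N.
  apply: eq_bigr => k _; rewrite lift0 subSS nth_mkseq //.
  by rewrite ltnS leq_subr.
rewrite e2; move: e; set S := \sum_(_ < _) _ => e.
have e' : a 0%N * b n.+1 + S = 0 by rewrite e.
have -> : S = - (a 0%N * b n.+1) by apply/eqP; rewrite -addr_eq0 addrC e'.
by field.
Qed.

Lemma inv_pow m n : fps_inv (fps_pow one_minus_x m) n = g m%:R n.
Proof.
apply: inv_unique => [|k]; first by rewrite pow_omx g_0 oner_neq0.
rewrite /fps_mul /fps_one -g0.
have -> : g 0 k = g (- m%:R + m%:R) k by rewrite addNr.
rewrite -gconv.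
by apply: eq_bigr => j _; rewrite pow_omx.
Qed.

Lemma invinv_pow m n :
  fps_inv (fps_inv (fps_pow one_minus_x m)) n = fps_pow one_minus_x m n.
Proof.
apply: inv_unique => [|k]; first by rewrite inv_pow g_0 oner_neq0.
rewrite /fps_mul /fps_one -g0.
have -> : g 0 k = g (m%:R - m%:R) k by rewrite addrN.
rewrite -gconv.
by apply: eq_bigr => j _; rewrite pow_omx inv_pow.
Qed.

Lemma inv_zpow z n : fps_inv (fps_zpow one_minus_x z) n = g z%:~R n.
Proof.
case: z => m /=; first by rewrite inv_pow.
change (fps_inv (fps_inv (fps_pow one_minus_x m.+1)) n = g (Negz m)%:~R n).
by rewrite invinv_pow pow_omx NegzE mulrNz.
Qed.

Definition Dop (s k : nat) (F : nat -> rat) (n : nat) : rat :=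
  (k%:R - n%:R) * F n - (s%:R - n%:R + 1) * (if n is m.+1 then F m else 0).

Lemma Dop_add s k F G n :
  Dop s k (fun n => F n + G n) n = Dop s k F n + Dop s k G n.
Proof. by rewrite /Dop; case: n => [|m]; ring. Qed.

Lemma Dop_ext s k F G n : (forall n, F n = G n) -> Dop s k F n = Dop s k G n.
Proof. by move=> e; rewrite /Dop; case: n => [|m]; rewrite !e. Qed.

Lemma nzn n : (n.+1%:R : rat) != 0.
Proof. by rewrite pnatr_eq0. Qed.

Lemma Hrec s i n : i.+1%:R * H s i.+1 n = Dop s i.+1 (H s i) n.
Proof.
rewrite /Dop /H; case: n => [|m].
  by rewrite /= !mulr0 subrr.
rewrite !ltnS.
case: (ltngtP i m) => [lt|gt|<-].
- rewrite [h s i.+1 m.+1]/= ltnS leqNgt lt /=.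
  by field; nz.
- by rewrite !mulr0 subrr.
- by rewrite subrr mul0r mulr0 mulr0 subrr.
Qed.

Definition TA (s k n : nat) : rat :=
  \sum_(j < k.+1) (-1) ^+ j.+1 * 'C(s, j)%:R * fps_Xn j n.
Definition TB (s k n : nat) : rat :=
  (-1) ^+ k.+1 * 'C(2 * s, k)%:R *
    (if (k.+1 <= n)%N then g s.+1%:R (n - k.+1)%N else 0).
Definition TC (s k n : nat) : rat :=
  (-1) ^+ k * (2 * s - k)%:R * 'C(2 * s, k)%:R *
    \sum_(t < k.+1) (-1) ^+ t * 'C(k, t)%:R * (1 / (2 * s - t)%:R) *
       g (s%:R - t%:R) n.
Definition T s k n := TA s k n + TB s k n + TC s k n.

Lemma bin_rat s m : m.+1%:R * 'C(s, m.+1)%:R = (s%:R - m%:R) * 'C(s, m)%:R :> rat.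
Proof.
case: (leqP m s) => hm.
  by rewrite -natrB // -!natrM mul_bin_left.
by rewrite !bin_small ?mulr0 // ltnW.
Qed.

Lemma bin_rat' s m : 'C(s, m.+1)%:R = (s%:R - m%:R) * 'C(s, m)%:R / m.+1%:R :> rat.
Proof. by rewrite -bin_rat; field; nz. Qed.

Lemma TA_closed s k n : TA s k n = if (n <= k)%N then (-1) ^+ n.+1 * 'C(s, n)%:R else 0.
Proof.
rewrite /TA /fps_Xn; case: ifP => hn.
  have hn' : (n < k.+1)%N by rewrite ltnS.
  rewrite (bigD1 (Ordinal hn')) //= eqxx mulr1 big1 ?addr0 // => j hj.
  have -> : (n == nat_of_ord j) = false.
    by apply/negbTE; apply: contra hj => /eqP hj; apply/eqP; apply: val_inj.
  by rewrite mulr0.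
rewrite big1 // => j _.
have -> : (n == nat_of_ord j) = false.
  apply/negbTE; apply/eqP => e; move: (ltn_ord j); rewrite -e ltnS hn //.
by rewrite mulr0.
Qed.

Lemma PartA s i n : i.+1%:R * TA s i.+1 n = Dop s i.+1 (TA s i) n.
Proof.
rewrite /Dop !TA_closed; case: n => [|m].
  by rewrite /= !mulr0 subr0 subr0.
rewrite !ltnS; case: (ltngtP m i) => [lt|gt|->].
- rewrite TA_closed (ltnW lt) bin_rat' !exprS; field; nz.
- by rewrite TA_closed leqNgt gt /= !mulr0 subrr.
- by rewrite TA_closed leqnn bin_rat' !exprS; field; nz.
Qed.

Lemma PartB s i n : (i.+1 < 2 * s)%N -> i.+1%:R * TB s i.+1 n = Dop s i.+1 (TB s i) n.
Proof.
move=> hi; rewrite /Dop /TB; case: n => [|m].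
  by rewrite /= !mulr0 subrr.
rewrite !ltnS; case: (ltngtP i m) => [lt|gt|->].
- have [k ->] : exists k, m = (k + i.+1)%N by exists (m - i.+1)%N; rewrite subnK.
  have -> : ((k + i.+1).+1 - i.+2 = k)%N by lia.
  have -> : ((k + i.+1).+1 - i.+1 = k.+1)%N by lia.
  have -> : ((k + i.+1) - i.+1 = k)%N by lia.
  rewrite bin_rat' (gSr _ k) natrM -!natr1 !natrD -!natr1 !exprS; field; nz.
- by rewrite !mulr0 subrr.
- by rewrite subrr mul0r !mulr0 subrr.
Qed.

Lemma DgL s k c n :
  Dop s k (g c) n = (k%:R - s%:R - c) * g c n + (s%:R + c) * g (c - 1) n.
Proof.
rewrite gP2 /Dop; case: n => [|m]; first by rewrite !g_0; ring.
rewrite gSr -natr1; field; nz.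
Qed.

Lemma Dop_sum s k K m (f : nat -> rat) (G : nat -> nat -> rat) n :
  Dop s k (fun n => K * \sum_(t < m) f t * G t n) n =
  K * \sum_(t < m) f t * Dop s k (G t) n.
Proof.
rewrite /Dop; case: n => [|n].
  rewrite !mulr0 !subr0 !mulr_sumr; apply: eq_bigr => t _; ring.
rewrite !mulr_sumr -sumrB; apply: eq_bigr => t _; ring.
Qed.

Lemma ext_r k (F : nat -> rat) : F k.+1 = 0 ->
  \sum_(u < k.+1) F u = \sum_(u < k.+2) F u.
Proof. by move=> e; rewrite [RHS]big_ord_recr /= e addr0. Qed.

Lemma shift_l k (F : nat -> rat) :
  \sum_(t < k.+1) F t = \sum_(u < k.+2) (fun u : nat => if u is u'.+1 then F u' else 0) u.
Proof. by rewrite [RHS]big_ord_recl /= add0r. Qed.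

Lemma PartC s i n : (i.+1 < 2 * s)%N -> i.+1%:R * TC s i.+1 n = Dop s i.+1 (TC s i) n.
Proof.
move=> hi.
pose K : rat := (-1) ^+ i * (2 * s - i)%:R * 'C(2 * s, i)%:R.
pose f := fun t : nat => ((-1) ^+ t * 'C(i, t)%:R * (1 / (2 * s - t)%:R) : rat).
have -> : Dop s i.+1 (TC s i) n =
  K * \sum_(t < i.+1) f t * Dop s i.+1 (g (s%:R - t%:R)) n.
  by rewrite -(Dop_sum s i.+1 K i.+1 f (fun t n => g (s%:R - t%:R) n)).
pose F1 := fun t : nat => f t * ((i.+1%:R - s%:R - (s%:R - t%:R)) * g (s%:R - t%:R) n).
pose F2 := fun t : nat => f t * ((s%:R + (s%:R - t%:R)) * g (s%:R - t.+1%:R) n).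
have -> : \sum_(t < i.+1) f t * Dop s i.+1 (g (s%:R - t%:R)) n =
   \sum_(t < i.+1) F1 t + \sum_(t < i.+1) F2 t.
  rewrite -big_split; apply: eq_bigr => t _ /=.
  rewrite DgL mulrDr /F1 /F2.
  by have -> : s%:R - t%:R - 1 = s%:R - t.+1%:R :> rat by rewrite -natr1 opprD addrA.
rewrite (ext_r i F1); last by rewrite /F1 /f bin_small // !mulr0 !mul0r.
rewrite (shift_l i F2) -big_split.
rewrite /TC mulrA mulr_sumr mulr_sumr; apply: eq_bigr => u _ /=.
have hu := ltn_ord u.
have s0 : (0 < s)%N by lia.
have R2 : (i%:R + 2 <= 2 * s%:R :> rat).
  have : (i.+2 <= 2 * s)%N by [].
  by rewrite -(ler_nat rat) natrM -!natr1 -addrA.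
have R3 : (0 <= i%:R :> rat) by apply: ler0n.
case: u hu => [[|u'] hu] /= hu'; rewrite /F1 /F2 /f /K.
  rewrite !bin0 subn0 bin_rat' !natrB; try lia.
  rewrite natrM !exprS !expr0 -!natr1 subr0; field.
  by repeat (apply/andP; split); apply/eqP => e; lra.
have R1 : (u'%:R + 1 <= i%:R + 1 :> rat).
  have : (u'.+1 <= i.+1)%N by [].
  by rewrite -(ler_nat rat) -!natr1.
have R4 : (0 <= u'%:R :> rat) by apply: ler0n.
rewrite binS natrD !bin_rat' !natrB; try lia.
rewrite natrM !exprS -!natr1; field.
by repeat (apply/andP; split); apply/eqP => e; lra.
Qed.

Lemma g_nat k n : (0 < k)%N -> g k%:R n = 'C(k + n - 1, n)%:R.
Proof.
move=> k0; elim: n => [|n IH]; first by rewrite g_0 bin0.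
rewrite gSr IH.
have -> : (k + n.+1 - 1 = k + n)%N by lia.
apply: (mulfI (nzn n)); rewrite -natrM -mul_bin_diag natrM.
have -> : ((k + n).-1 = k + n - 1)%N by lia.
rewrite natrD; field; nz.
Qed.

Lemma base s n : (0 < s)%N -> H s 0 n = T s 0 n.
Proof.
move=> s0.
have s0' : (s%:R : rat) != 0 by rewrite pnatr_eq0 -lt0n.
rewrite /T /TA /TB /TC /H !big_ord1 subr0 !subn0 !bin0 /fps_Xn; case: n => [|m].
  by rewrite /= g_0 natrM; field.
rewrite /= !g_nat //.
have -> : (s.+1 + (m.+1 - 1) - 1 = s + m)%N by lia.
have -> : (s + m.+1 - 1 = s + m)%N by lia.
have E := mul_bin_left (s + m) m.
have e2 : (s + m - m = s)%N by lia.
rewrite e2 in E.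
have E' : ('C(s + m, m)%:R : rat) = m.+1%:R * 'C(s + m, m.+1)%:R / s%:R.
  by rewrite -natrM E natrM; field.
rewrite subSS subn0 E' natrM -!natr1 !expr0 expr1; field.
exact: s0'.
Qed.

Lemma HT s i : (0 < s)%N -> (i <= 2 * s - 1)%N -> forall n, H s i n = T s i n.
Proof.
move=> s0; elim: i => [|i IH] hi n; first exact: base.
have hi' : (i.+1 < 2 * s)%N by lia.
have IH' := IH (ltnW hi).
apply: (mulfI (nzn i)); rewrite Hrec (Dop_ext _ _ _ _ _ IH').
have -> : Dop s i.+1 (T s i) n =
  Dop s i.+1 (TA s i) n + Dop s i.+1 (TB s i) n + Dop s i.+1 (TC s i) n.
  by rewrite /Dop /T; case: n => [|m]; ring.
by rewrite /T !mulrDr PartA PartB // PartC.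
Qed.

Theorem proposition1 (s i : nat) (hs : (0 < s)%N) (hi : (i <= 2 * s - 1)%N) :
  forall n : nat,
  H s i n =
    \sum_(j < i.+1) (-1) ^+ j.+1 * 'C(s, j)%:R * fps_Xn j n
  + (-1) ^+ i.+1 * 'C(2 * s, i)%:R *
      fps_mul (fps_Xn i.+1) (fps_inv (fps_pow one_minus_x s.+1)) n
  + (-1) ^+ i * (2 * s - i)%:R * 'C(2 * s, i)%:R *
      \sum_(t < i.+1) (-1) ^+ t * 'C(i, t)%:R * (1 / (2 * s - t)%:R) *
         fps_inv (fps_zpow one_minus_x (s%:Z - t%:Z)) n.
Proof.
move=> n; rewrite HT // /T /TA /TB /TC Xn_mul.
congr (_ + _ * _).
  by case: ifP => _ //; rewrite inv_pow.
apply: eq_bigr => t _; rewrite inv_zpow intrB.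
by [].
Qed.
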